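(* Let $\operatorname{char}(k)\ne2$, let $a_1,\dots,a_r\in X$ and $\mu=[a_r,\dots,a_1]_R$. Then: (i) for every $j$ with $2\le j<r$, $$\mu\sim(-1)^{|a_j||a_{j+1}\cdots a_r|}[a_j,a_r,\dots,a_{j+1},a_{j-1},\dots,a_1]_R;$$ (ii) for all $i,j$ with $2\le j<i\le r$, $$\mu\sim(-1)^{|a_i||a_j\cdots a_{i-1}|+|a_j||a_{j+1}\cdots a_{i-1}|}[a_r,\dots,a_{i+1},a_j,a_{i-1},\dots,a_{j+1},a_i,a_{j-1},\dots,a_1]_R.$$
   Context: A GDN superalgebra is a superalgebra $\mathcal A=\mathcal A_0\oplus\mathcal A_1$ over a field $k$ (product $\circ$, $\mathcal A_i\circ\mathcal A_j\subseteq\mathcal A_{i+j}$ mod 2, $|x|=i$ for nonzero $x\in\mathcal A_i$) satisfying for homogeneous $x,y,z$: $x\circ(y\circ z)-(x\circ y)\circ z=(-1)^{|x||y|}(y\circ(x\circ z)-(y\circ x)\circ z)$ and $(x\circ y)\circ z=(-1)^{|y||z|}(x\circ z)\circ y$. $X=X_0\sqcup X_1$ is well-ordered, elements of $X_i$ have parity $i$, and $\mathrm{GDN}_s(X)$ is the free GDN superalgebra on $X$. Terms over $X$: letters of $X$ and products $(\mu\circ\nu)$ of terms, regarded as elements of $\mathrm{GDN}_s(X)$; length $\ell$ is the number of letters. $[\mu_1,\dots,\mu_n]_R=(\mu_1\circ(\cdots\circ(\mu_{n-1}\circ\mu_n)\cdots))$. Root number: $r(a)=0$ ($a\in X$), $r((\mu\circ\nu))=r(\mu)+1$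 if $\nu\in X$, else $r(\mu)+r(\nu)$. For a string $a_1\cdots a_n$ of letters, $|a_1\cdots a_n|=|a_1|+\dots+|a_n|\pmod 2$, and the empty string has parity $0$. For terms $\mu,\nu$ with $r(\mu)=r(\nu)$, $\ell(\mu)=\ell(\nu)$ and nonzero $\alpha,\beta\in k$, write $\alpha\mu\sim\beta\nu$ if $\alpha\mu-\beta\nu=\sum_i\alpha_i\mu_i$ in $\mathrm{GDN}_s(X)$ for some $\alpha_i\in k$ and terms $\mu_i$ with $\ell(\mu_i)=\ell(\mu)$ and $r(\mu_i)>r(\mu)$. *)

(* Defs.v *)
From mathcomp Require Import all_boot all_order all_algebra.
Set Implicit Arguments. Unset Strict Implicit. Unset Printing Implicit Defensive.
Import GRing.Theory.
Local Open Scope ring_scope.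

Section GDN.
Variables (k : fieldType) (X : Type) (par : X -> bool).

Inductive term : Type := Var of X | Mul of term & term.

Fixpoint tpar (t : term) : bool :=
  match t with Var a => par a | Mul u v => tpar u (+) tpar v end.

Fixpoint len (t : term) : nat :=
  match t with Var _ => 1%N | Mul u v => (len u + len v)%N end.

Fixpoint rootn (t : term) : nat :=
  match t with
  | Var _ => 0%N
  | Mul u v => match v with Var _ => (rootn u).+1 | _ => (rootn u + rootn v)%N end
  end.

(* formal linear combinations of terms: sum of c * t over (c,t) in the list *)
Definition lin := seq (k * term).

Inductive feq1 : lin -> lin -> Prop :=
| fe_swap x y p : feq1 (x :: y :: p) (y :: x :: p)
| fe_merge c d t p : feq1 ((c, t) :: (d, t) :: p) ((c + d, t) :: p)
| fe_zero t p : feq1 ((0, t) :: p) p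
| fe_cons x p q : feq1 p q -> feq1 (x :: p) (x :: q).

Definition sgn (b : bool) : k := (-1) ^+ b.

Definition gdn_id1 (x y z : term) : lin :=
  let s := sgn (tpar x && tpar y) in
  [:: (1, Mul x (Mul y z)); (-1, Mul (Mul x y) z);
      (- s, Mul y (Mul x z)); (s, Mul (Mul y x) z)].

Definition gdn_id2 (x y z : term) : lin :=
  [:: (1, Mul (Mul x y) z); (- sgn (tpar y && tpar z), Mul (Mul x z) y)].

Definition lscale (c : k) (p : lin) : lin := map (fun ct => (c * ct.1, ct.2)) p.
Definition lmul (u : term) (p : lin) : lin := map (fun ct => (ct.1, Mul u ct.2)) p.
Definition rmul (u : term) (p : lin) : lin := map (fun ct => (ct.1, Mul ct.2 u)) p.

(* GDNzero p : the formal sum p lies in the two-sided ideal of the free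
   (nonassociative) superalgebra k<X> generated by all instances of the two
   GDN super-identities on homogeneous elements (by multilinearity: on terms);
   i.e. p = 0 in GDN_s(X). *)
Inductive GDNzero : lin -> Prop :=
| gz_nil : GDNzero [::]
| gz_id1 x y z : GDNzero (gdn_id1 x y z)
| gz_id2 x y z : GDNzero (gdn_id2 x y z)
| gz_add p q : GDNzero p -> GDNzero q -> GDNzero (p ++ q)
| gz_scale c p : GDNzero p -> GDNzero (lscale c p)
| gz_lmul u p : GDNzero p -> GDNzero (lmul u p)
| gz_rmul u p : GDNzero p -> GDNzero (rmul u p)
| gz_feq p q : feq1 p q -> GDNzero p -> GDNzero q
| gz_feqV p q : feq1 p q -> GDNzero q -> GDNzero p.

Definition gdn_sim (alpha : k) (mu : term) (beta : k) (nu : term) : Prop :=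
  [/\ alpha != 0, beta != 0, rootn mu = rootn nu, len mu = len nu &
   exists s : lin,
     (forall i, (i < size s)%N ->
        len (nth (0%R : k, mu) s i).2 = len mu /\ (rootn mu < rootn (nth (0%R : k, mu) s i).2)%N) /\
     GDNzero ((alpha, mu) :: (- beta, nu) :: lscale (-1) s)].

(* rnormR b n = [b n, b (n-1), ..., b 1]_R  (for n >= 1; n = 0 unused) *)
Fixpoint rnormR (b : nat -> X) (n : nat) : term :=
  match n with
  | 0 => Var (b 0)
  | n'.+1 => if n' is 0 then Var (b 1) else Mul (Var (b n)) (rnormR b n')
  end.

(* parity |a_lo a_{lo+1} ... a_hi| of a string (false = 0 if empty) *)
Definition spar (a : nat -> X) (lo hi : nat) : bool :=
  \big[addb/false]_(lo <= m < hi.+1) par (a m).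

End GDN.

(* Main.v *)
Require Import Defs.
From mathcomp Require Import all_boot all_order all_algebra zify.
Import GRing.Theory.
Local Open Scope ring_scope.

Set Implicit Arguments. Unset Strict Implicit.
Section S.
Variables (k : fieldType) (X : Type) (par : X -> bool).
Local Notation Z := (@GDNzero k X par).

Fixpoint goodP (l rt : nat) (s : lin k X) : Prop :=
  match s with [::] => True
  | ct :: s' => (len ct.2 = l /\ (rt < rootn ct.2)%N) /\ goodP l rt s' end.

Inductive feqs : lin k X -> lin k X -> Prop :=
| fs_refl p : feqs p p
| fs_step p q r : feq1 p q -> feqs q r -> feqs p r.

Lemma feqs_cons x p q : feqs p q -> feqs (x :: p) (x :: q).
Proof.
elim=> [p0|p0 q0 r0 H _ IH]; first exact: fs_refl.
exact: (fs_step (fe_cons x H) IH).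
Qed.

Lemma feqs_trans p q r : feqs p q -> feqs q r -> feqs p r.
Proof. elim=> // p0 q0 r0 H _ IH /IH; exact: fs_step. Qed.

Lemma Z_feqs p q : feqs p q -> Z p -> Z q.
Proof. elim=> // p0 q0 r0 H _ IH Hp; apply: IH; exact: gz_feq H Hp. Qed.

Lemma feqs_move p x q : feqs (p ++ x :: q) (x :: p ++ q).
Proof.
elim: p => [|y p IH] /=; first exact: fs_refl.
apply: feqs_trans (feqs_cons y IH) _.
exact: fs_step (fe_swap _ _ _) (fs_refl _).
Qed.

Lemma goodP_cat l rt s1 s2 : goodP l rt s1 -> goodP l rt s2 -> goodP l rt (s1 ++ s2).
Proof. elim: s1 => //= ct s IH [H1 H2] H3; split=> //; exact: IH. Qed.

Lemma goodP_lscale l rt (c : k) s : goodP l rt s -> goodP l rt (lscale c s).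
Proof. elim: s => //= ct s IH [H1 H2]; split=> //; exact: IH. Qed.

Lemma lscaleA (a b : k) (s : lin k X) : lscale a (lscale b s) = lscale (a * b) s.
Proof. rewrite /lscale -map_comp; apply: eq_map => -[c t] /=; by rewrite mulrA. Qed.

Definition Rl (m : term X) (e : k) (n : term X) :=
  exists s, goodP (len m) (rootn m) s /\ Z ((1, m) :: (- e, n) :: lscale (-1) s).

Lemma Rl_refl m : Rl m 1 m.
Proof.
exists [::]; split=> //=.
apply: (gz_feqV (fe_merge _ _ _ _)); rewrite subrr.
apply: (gz_feqV (fe_zero _ _)); exact: gz_nil.
Qed.

Lemma Rl_trans m n p e f : len n = len m -> rootn n = rootn m ->
  Rl m e n -> Rl n f p -> Rl m (e * f) p.
Proof.
move=> El Er [s1 [G1 H1]] [s2 [G2 H2]].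
exists (s1 ++ lscale e s2); split.
  apply: goodP_cat G1 _; apply: goodP_lscale; by rewrite -El -Er.
have H := gz_add H1 (gz_scale e H2).
rewrite /= in H.
have H' := Z_feqs (feqs_cons _ (feqs_cons _ (feqs_move _ _ _))) H.
have H3 := gz_feq (fe_cons _ (fe_merge _ _ _ _)) H'.
rewrite mulr1 addNr in H3.
have H4 := gz_feq (fe_cons _ (fe_zero _ _)) H3.
have H5 := Z_feqs (feqs_cons _ (feqs_move _ _ _)) H4.
move: H5; rewrite mulrN /lscale map_cat -!map_comp.
congr (Z (_ :: _ :: _ ++ _)); apply: eq_map => -[c t] /=.
by rewrite mulrCA.
Qed.

Lemma rootn_lmul_lt (c : X) (t : term X) rt : (rt < rootn t)%N -> rootn (Mul (Var c) t) = rootn t.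
Proof. by case: t. Qed.

Lemma Rl_lmul (c : X) u v e n : Rl (Mul u v) e n ->
  Rl (Mul (Var c) (Mul u v)) e (Mul (Var c) n).
Proof.
move=> [s [G H]]; exists (lmul (Var c) s); split.
  clear H; move: G; rewrite [rootn (Mul (Var c) _)]/= add0n.
  elim: s => //= -[d t] s IH /= [[H1 H2] H3]; split; last exact: IH.
  rewrite /=; have := rootn_lmul_lt c H2; rewrite /= => ->; by rewrite H1.
have := gz_lmul (Var c) H; rewrite /=.
congr (Z (_ :: _ :: _)).
by rewrite /lmul /lscale -!map_comp.
Qed.

Lemma Rl_swap (a b : X) w : Rl (Mul (Var a) (Mul (Var b) w)) (sgn k (par a && par b))
   (Mul (Var b) (Mul (Var a) w)).
Proof.
exists [:: (1, Mul (Mul (Var a) (Var b)) w); (- sgn k (par a && par b), Mul (Mul (Var b) (Var a)) w)].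
split.
  by case: w => [x|u v] /=; rewrite !addnA; split; split.
rewrite /= mulr1 mulN1r opprK.
have := @gz_id1 k X par (Var a) (Var b) w.
rewrite /gdn_id1 /=.
exact: (gz_feq (fe_cons _ (fe_swap _ _ _))).
Qed.

Definition sw (kk : nat) (b : nat -> X) (m : nat) : X :=
  if m == kk then b kk.+1 else if m == kk.+1 then b kk else b m.

Lemma eq_rnormR (b b' : nat -> X) n :
  (forall m, (m <= n)%N -> b m = b' m) -> rnormR b n = rnormR b' n.
Proof.
elim: n => [|n IH] H /=; first by rewrite H.
case: n IH H => [|n] IH H; first by rewrite H.
rewrite H // IH // => m Hm; apply: H; exact: leqW.
Qed.

Lemma rnormRS (b : nat -> X) n :
  rnormR b n.+2 = Mul (Var (b n.+2)) (rnormR b n.+1).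
Proof. by []. Qed.

Lemma len_rnormR (b : nat -> X) n : len (rnormR b n.+1) = n.+1.
Proof. elim: n => // n IH; by rewrite rnormRS /= IH. Qed.

Lemma rootn_rnormR (b : nat -> X) n : rootn (rnormR b n.+2) = 1%N.
Proof.
by elim: n.
Qed.

Lemma shape (b b' : nat -> X) n :
  len (rnormR b' n) = len (rnormR b n) /\ rootn (rnormR b' n) = rootn (rnormR b n).
Proof.
case: n => [|[|n]] //; by rewrite !len_rnormR !rootn_rnormR.
Qed.

Lemma Rl_trR r (a b c : nat -> X) e f :
  Rl (rnormR a r) e (rnormR b r) -> Rl (rnormR b r) f (rnormR c r) ->
  Rl (rnormR a r) (e * f) (rnormR c r).
Proof. by case: (shape a b r) => H1 H2; apply: Rl_trans. Qed.

Lemma Rl_sw r (b : nat -> X) kk : (2 <= kk)%N -> (kk < r)%N ->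
  Rl (rnormR b r) (sgn k (par (b kk.+1) && par (b kk))) (rnormR (sw kk b) r).
Proof.
move=> Hk; elim: r => // r IH Hr.
have [Hlt|Heq] : (kk < r)%N \/ kk = r by lia.
  case: r IH Hr Hlt => [|[|r']] IH Hr Hlt; try lia.
  have Esw : sw kk b r'.+3 = b r'.+3.
    rewrite /sw; do ![case: ifP => ?]; congr (b _); lia.
  have H := Rl_lmul (b r'.+3) (u:=Var (b r'.+2)) (v:=rnormR b r'.+1) (IH Hlt).
  rewrite [rnormR (sw kk b) r'.+3]rnormRS Esw; exact: H.
subst r; case: kk Hk IH Hr => [|[|kk]] Hk IH Hr; try lia.
rewrite [rnormR (sw _ b) _]rnormRS [rnormR (sw _ b) kk.+2]rnormRS.
have -> : sw kk.+2 b kk.+3 = b kk.+2 by rewrite /sw; do ![case: ifP => ?]; congr (b _); lia.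
have -> : sw kk.+2 b kk.+2 = b kk.+3 by rewrite /sw; do ![case: ifP => ?]; congr (b _); lia.
rewrite (@eq_rnormR (sw kk.+2 b) b kk.+1); last first.
  move=> m Hm; rewrite /sw; do ![case: ifP => ?]; congr (b _); lia.
exact: Rl_swap.
Qed.

Lemma spar_ext (a a' : nat -> X) lo hi :
  (forall m, (lo <= m <= hi)%N -> a m = a' m) -> spar par a lo hi = spar par a' lo hi.
Proof.
move=> H; rewrite /spar; apply: eq_big_nat => m Hm; rewrite H //; lia.
Qed.

Lemma spar_cons (a : nat -> X) lo hi : (lo <= hi)%N ->
  spar par a lo hi = par (a lo) (+) spar par a lo.+1 hi.
Proof. move=> H; rewrite /spar big_ltn //; lia. Qed.

Lemma spar_nil (a : nat -> X) lo hi : (hi < lo)%N -> spar par a lo hi = false.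
Proof. move=> H; rewrite /spar big_geq //. Qed.

Lemma sgnD b1 b2 : sgn k b1 * sgn k b2 = sgn k (b1 (+) b2).
Proof. by rewrite /sgn signr_addb. Qed.

Definition rot r j (a : nat -> X) m :=
  if m == r then a j else if (j <= m)%N then a m.+1 else a m.

Lemma Rl_rot r d : forall j (a : nat -> X), (r - j)%N = d -> (2 <= j <= r)%N ->
  Rl (rnormR a r) (sgn k (par (a j) && spar par a j.+1 r)) (rnormR (rot r j a) r).
Proof.
elim: d => [|d IH] j a Hd Hj.
  have Ej : j = r by lia.
  subst j; rewrite spar_nil // andbF /sgn /= expr0.
  rewrite (@eq_rnormR (rot r r a) a r); first exact: Rl_refl.
  move=> m Hm; rewrite /rot; do ![case: ifP => ?]; congr (a _); lia.
have H1 := @Rl_sw r a j ltac:(lia) ltac:(lia).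
have H2 := IH j.+1 (sw j a) ltac:(lia) ltac:(lia).
have H := Rl_trR H1 H2.
rewrite (@eq_rnormR (rot r j a) (rot r j.+1 (sw j a)) r); last first.
  move=> m Hm; rewrite /rot /sw; do ![case: ifP => ?]; congr (a _); lia.
have E1 : sw j a j.+1 = a j by rewrite /sw; do ![case: ifP => ?]; congr (a _); lia.
have E2 : spar par (sw j a) j.+2 r = spar par a j.+2 r.
  apply: spar_ext => m Hm; rewrite /sw; do ![case: ifP => ?]; congr (a _); lia.
move: H; rewrite sgnD E1 E2 (@spar_cons a j.+1 r ltac:(lia)).
by case: (par (a j)); case: (par (a j.+1)); case: (spar par a j.+2 r).
Qed.

Definition tr i j (a : nat -> X) m :=
  if m == i then a j else if m == j then a i else a m.

Lemma Rl_tr r d : forall i j (a : nat -> X), (i - j)%N = d.+1 -> (2 <= j)%N -> (i <= r)%N ->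
  Rl (rnormR a r)
    (sgn k ((par (a i) && spar par a j i.-1) (+) (par (a j) && spar par a j.+1 i.-1)))
    (rnormR (tr i j a) r).
Proof.
elim: d => [|d IH] i j a Hd Hj Hi.
  have Ei : i = j.+1 by lia.
  subst i; rewrite /= (@spar_nil a j.+1 j ltac:(lia)) andbF addbF.
  rewrite (@spar_cons a j j) // (@spar_nil a j.+1 j ltac:(lia)) addbF.
  rewrite (@eq_rnormR (tr j.+1 j a) (sw j a) r); first exact: Rl_sw.
  move=> m Hm; rewrite /tr /sw; do ![case: ifP => ?]; congr (a _); lia.
have H1 := @Rl_sw r a j ltac:(lia) ltac:(lia).
have H2 := IH i j.+1 (sw j a) ltac:(lia) ltac:(lia) Hi.
have H3 := @Rl_sw r (tr i j.+1 (sw j a)) j ltac:(lia) ltac:(lia).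
have H := Rl_trR (Rl_trR H1 H2) H3.
rewrite (@eq_rnormR (tr i j a) (sw j (tr i j.+1 (sw j a))) r); last first.
  move=> m Hm; rewrite /tr /sw; do ![case: ifP => ?]; congr (a _); lia.
have E1 : sw j a j.+1 = a j by rewrite /sw; do ![case: ifP => ?]; congr (a _); lia.
have E2 : sw j a i = a i by rewrite /sw; do ![case: ifP => ?]; congr (a _); lia.
have E3 : tr i j.+1 (sw j a) j.+1 = a i.
  by rewrite /tr /sw; do ![case: ifP => ?]; congr (a _); lia.
have E4 : tr i j.+1 (sw j a) j = a j.+1.
  by rewrite /tr /sw; do ![case: ifP => ?]; congr (a _); lia.
have E5 : spar par (sw j a) j.+2 i.-1 = spar par a j.+2 i.-1.
  apply: spar_ext => m Hm; rewrite /sw; do ![case: ifP => ?]; congr (a _); lia.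
move: H; rewrite !sgnD E1 E2 E3 E4 (@spar_cons (sw j a) j.+1 i.-1 ltac:(lia)).
rewrite E1 E5 (@spar_cons a j i.-1 ltac:(lia)) (@spar_cons a j.+1 i.-1 ltac:(lia)).
by case: (par (a j)); case: (par (a j.+1)); case: (par (a i)); case: (spar par a j.+2 i.-1).
Qed.

Lemma goodP_nth l rt s x0 : goodP l rt s -> forall i, (i < size s)%N ->
  len (nth x0 s i).2 = l /\ (rt < rootn (nth x0 s i).2)%N.
Proof. elim: s => //= ct s IH [H1 H2] [|i] //= Hi; exact: IH. Qed.

Lemma Rl_sim r (a b : nat -> X) bb :
  Rl (rnormR a r) (sgn k bb) (rnormR b r) ->
  gdn_sim par 1 (rnormR a r) (sgn k bb) (rnormR b r).
Proof.
move=> [s [G H]]; case: (shape a b r) => E1 E2.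
split=> //; first exact: oner_neq0.
  by rewrite /sgn signr_eq0.
exists s; split=> //; exact: goodP_nth.
Qed.

End S.

Theorem lemma2p8 (k : fieldType) (X : Type) (par : X -> bool)
  (hk : (2%:R : k) != 0) (r : nat) (a : nat -> X) :
  (forall j : nat, (2 <= j < r)%N ->
     gdn_sim par 1 (rnormR a r)
       (sgn k (par (a j) && spar par a j.+1 r))
       (rnormR (fun m => if m == r then a j
                         else if (j <= m)%N then a m.+1 else a m) r))
  /\
  (forall i j : nat, (2 <= j)%N -> (j < i)%N -> (i <= r)%N ->
     gdn_sim par 1 (rnormR a r)
       (sgn k ((par (a i) && spar par a j i.-1)
               (+) (par (a j) && spar par a j.+1 i.-1)))
       (rnormR (fun m => if m == i then a j
                         else if m == j then a i else a m) r)).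
Proof.
split.
  move=> j Hj; apply: Rl_sim.
  exact: (@Rl_rot k X par r (r - j) j a erefl ltac:(lia)).
move=> i j Hj Hji Hi; apply: Rl_sim.
exact: (@Rl_tr k X par r (i - j).-1 i j a ltac:(lia) Hj Hi).
Qed.
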